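(* Let $M_2\ge1$, $M_1=2^{M_2-1}$, and define the $M_1\times M_2$ matrix $g_{x_1,x_2}=1-2\big(\lfloor 2^{1-x_2}(x_1-1)\rfloor \bmod 2\big)$. Then all singular values of $g$ equal $\sqrt{M_1}$, and the quantum value of $g$ equals $M_1\sqrt{M_2}$ and is attained by a quantum strategy.
   Context: The quantum value is the supremum of $\sum_{x_1,x_2}g_{x_1,x_2}\operatorname{tr}(\rho\,\mathcal A_1(x_1)\otimes\mathcal A_2(x_2))$ over finite-dimensional complex Hilbert spaces $\mathcal H_1,\mathcal H_2$, density operators $\rho$ on $\mathcal H_1\otimes\mathcal H_2$ and Hermitian operators $\mathcal A_i(x_i)$ on $\mathcal H_i$ with eigenvalues in $[-1,1]$. *)

(* Defs.v *)
From HB Require Import structures.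
From mathcomp Require Import all_boot all_order all_algebra.
Set Implicit Arguments. Unset Strict Implicit. Unset Printing Implicit Defensive.
Import Order.TTheory GRing.Theory Num.Theory.
Local Open Scope ring_scope.

Definition adjmx (C : numClosedFieldType) m n (A : 'M[C]_(m, n)) : 'M[C]_(n, m) :=
  (map_mx Num.conj A)^T.

(* Decoding an index of C^(m*n) = C^m (x) C^n into a pair of indices
   (inverse of mathcomp's mxvec_index). *)
Definition kron_idx m n (k : 'I_(m * n)) : 'I_m * 'I_n :=
  enum_val (cast_ord (esym (mxvec_cast m n)) k).

Definition kronmx (R : pzRingType) m1 n1 m2 n2
    (A : 'M[R]_(m1, n1)) (B : 'M[R]_(m2, n2)) : 'M[R]_(m1 * m2, n1 * n2) :=
  \matrix_(p, q) (A (kron_idx p).1 (kron_idx q).1 * B (kron_idx p).2 (kron_idx q).2).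

Definition hermitian (C : numClosedFieldType) n (A : 'M[C]_n) : Prop :=
  adjmx A = A.

Definition psd (C : numClosedFieldType) n (A : 'M[C]_n) : Prop :=
  forall v : 'cV[C]_n, 0 <= (adjmx v *m A *m v) 0 0.

Definition density (C : numClosedFieldType) n (rho : 'M[C]_n) : Prop :=
  psd rho /\ \tr rho = 1.

Definition observable (C : numClosedFieldType) n (A : 'M[C]_n) : Prop :=
  hermitian A /\ (forall a, eigenvalue A a -> (-1 <= a <= 1)).

Definition singular_value (C : numClosedFieldType) m n (A : 'M[C]_(m, n)) (s : C) : Prop :=
  0 <= s /\ eigenvalue (adjmx A *m A) (s ^+ 2).

Definition strategy_value (C : numClosedFieldType) M1 M2 (g : 'M[C]_(M1, M2))
    d1 d2 (rho : 'M[C]_(d1 * d2)) (A1 : 'I_M1 -> 'M[C]_d1) (A2 : 'I_M2 -> 'M[C]_d2) : C :=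
  \sum_(x1 < M1) \sum_(x2 < M2) g x1 x2 * \tr (rho *m kronmx (A1 x1) (A2 x2)).

Definition is_quantum_strategy (C : numClosedFieldType) M1 M2 d1 d2
    (rho : 'M[C]_(d1 * d2)) (A1 : 'I_M1 -> 'M[C]_d1) (A2 : 'I_M2 -> 'M[C]_d2) : Prop :=
  density rho /\ (forall x1, observable (A1 x1)) /\ (forall x2, observable (A2 x2)).

Definition quantum_value_attained (C : numClosedFieldType) M1 M2 (g : 'M[C]_(M1, M2)) (v : C) : Prop :=
  (forall d1 d2 (rho : 'M[C]_(d1 * d2)) (A1 : 'I_M1 -> 'M[C]_d1) (A2 : 'I_M2 -> 'M[C]_d2),
      is_quantum_strategy rho A1 A2 -> strategy_value g rho A1 A2 <= v) /\
  (exists d1 d2 (rho : 'M[C]_(d1 * d2)) (A1 : 'I_M1 -> 'M[C]_d1) (A2 : 'I_M2 -> 'M[C]_d2),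
      is_quantum_strategy rho A1 A2 /\ strategy_value g rho A1 A2 = v).

(* The game matrix, 0-based indices i = x1 - 1, j = x2 - 1:
   g_{x1,x2} = 1 - 2 (floor(2^{1-x2} (x1-1)) mod 2) = 1 - 2 ((i %/ 2^j) %% 2). *)
Definition gmat (R : pzRingType) M1 M2 : 'M[R]_(M1, M2) :=
  \matrix_(i < M1, j < M2) (1 - 2 * (((i : nat) %/ 2 ^ (j : nat)) %% 2)%N%:R).

(* Main.v *)
Set Warnings "-notation-overridden -ambiguous-paths".
Require Import Defs.
From HB Require Import structures.
From mathcomp Require Import all_boot all_order all_algebra.
From mathcomp Require Import ring zify.
Import Order.TTheory GRing.Theory Num.Theory.
Set Implicit Arguments. Unset Strict Implicit.
Local Open Scope ring_scope.
Definition kinv m n (u : 'I_m * 'I_n) : 'I_(m*n) := cast_ord (mxvec_cast m n) (enum_rank u).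
Arguments kinv {m n}.

Lemma kinvK m n : cancel (@kinv m n) (@kron_idx m n).
Proof. by move=> u; rewrite /kron_idx /kinv cast_ordK enum_rankK. Qed.

Lemma kron_idxK m n : cancel (@kron_idx m n) (@kinv m n).
Proof. by move=> p; rewrite /kron_idx /kinv enum_valK cast_ordKV. Qed.

Lemma kinv_surj m n (p : 'I_(m*n)) : exists u, p = kinv u.
Proof. by exists (kron_idx p); rewrite kron_idxK. Qed.

Lemma sum_kron {R : pzRingType} m n (F : 'I_(m*n) -> R) :
  \sum_p F p = \sum_i \sum_j F (kinv (i, j)).
Proof.
rewrite (reindex (@kinv m n)); last by exists (@kron_idx m n) => x _; [apply: kinvK|apply: kron_idxK].
by rewrite pair_big /=; apply: eq_bigr => -[i j].
Qed.

Lemma kronE {R : pzRingType} m1 n1 m2 n2 (A : 'M[R]_(m1, n1)) (B : 'M[R]_(m2, n2)) i j k l :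
  kronmx A B (kinv (i, j)) (kinv (k, l)) = A i k * B j l.
Proof. by rewrite /kronmx mxE !kinvK. Qed.

Lemma kron_mul {R : comPzRingType} m n p q r s (A : 'M[R]_(m, n)) (B : 'M[R]_(p, q))
  (C : 'M[R]_(n, r)) (D : 'M[R]_(q, s)) :
  kronmx A B *m kronmx C D = kronmx (A *m C) (B *m D).
Proof.
apply/matrixP => x y; rewrite !mxE sum_kron.
have [[a b] ->] := kinv_surj x; have [[c d] ->] := kinv_surj y.
rewrite !kinvK /= big_distrlr /=; apply: eq_bigr => i _; apply: eq_bigr => j _.
by rewrite !kronE mulrACA.
Qed.

Lemma kron1 {R : pzRingType} m n : kronmx (1%:M : 'M[R]_m) (1%:M : 'M[R]_n) = 1%:M.
Proof.
apply/matrixP => x y; rewrite !mxE.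
have [[i j] ->] := kinv_surj x; have [[k l] ->] := kinv_surj y.
rewrite !kinvK /= (inj_eq (can_inj (@kinvK m n))) xpair_eqE.
by case: (i == k); case: (j == l); rewrite ?mulr1 ?mulr0 ?mul0r.
Qed.

Lemma kronDl {R : pzRingType} m1 n1 m2 n2 (A A' : 'M[R]_(m1, n1)) (B : 'M[R]_(m2, n2)) :
  kronmx (A + A') B = kronmx A B + kronmx A' B.
Proof. by apply/matrixP => x y; rewrite !mxE mulrDl. Qed.

Lemma kronDr {R : pzRingType} m1 n1 m2 n2 (A : 'M[R]_(m1, n1)) (B B' : 'M[R]_(m2, n2)) :
  kronmx A (B + B') = kronmx A B + kronmx A B'.
Proof. by apply/matrixP => x y; rewrite !mxE mulrDr. Qed.

Lemma kronZl {R : comPzRingType} m1 n1 m2 n2 c (A : 'M[R]_(m1, n1)) (B : 'M[R]_(m2, n2)) :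
  kronmx (c *: A) B = c *: kronmx A B.
Proof. by apply/matrixP => x y; rewrite !mxE mulrA. Qed.

Lemma kronZr {R : comPzRingType} m1 n1 m2 n2 c (A : 'M[R]_(m1, n1)) (B : 'M[R]_(m2, n2)) :
  kronmx A (c *: B) = c *: kronmx A B.
Proof. by apply/matrixP => x y; rewrite !mxE mulrCA. Qed.

Lemma kronNl {R : pzRingType} m1 n1 m2 n2 (A : 'M[R]_(m1, n1)) (B : 'M[R]_(m2, n2)) :
  kronmx (- A) B = - kronmx A B.
Proof. by apply/matrixP => x y; rewrite !mxE mulNr. Qed.

Lemma kron_sumr {R : pzRingType} m1 n1 m2 n2 (I : finType) (A : 'M[R]_(m1, n1)) (B : I -> 'M[R]_(m2, n2)) :
  kronmx A (\sum_i B i) = \sum_i kronmx A (B i).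
Proof.
apply/matrixP => x y; rewrite !mxE !summxE mulr_sumr; apply: eq_bigr => i _.
by rewrite !mxE.
Qed.

Lemma kron_adj {C : numClosedFieldType} m1 n1 m2 n2 (A : 'M[C]_(m1, n1)) (B : 'M[C]_(m2, n2)) :
  adjmx (kronmx A B) = kronmx (adjmx A) (adjmx B).
Proof. by apply/matrixP => x y; rewrite !mxE rmorphM. Qed.

Lemma adjmx_mul {C : numClosedFieldType} m n p (A : 'M[C]_(m, n)) (B : 'M[C]_(n, p)) :
  adjmx (A *m B) = adjmx B *m adjmx A.
Proof. by rewrite /adjmx map_mxM trmx_mul. Qed.

Lemma adjmxK {C : numClosedFieldType} m n (A : 'M[C]_(m, n)) : adjmx (adjmx A) = A.
Proof. by apply/matrixP => x y; rewrite !mxE conjCK. Qed.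

Lemma adjmxD {C : numClosedFieldType} m n (A B : 'M[C]_(m, n)) : adjmx (A + B) = adjmx A + adjmx B.
Proof. by apply/matrixP => x y; rewrite !mxE rmorphD. Qed.

Lemma adjmxN {C : numClosedFieldType} m n (A : 'M[C]_(m, n)) : adjmx (- A) = - adjmx A.
Proof. by apply/matrixP => x y; rewrite !mxE rmorphN. Qed.

Lemma adjmxZ {C : numClosedFieldType} m n c (A : 'M[C]_(m, n)) : adjmx (c *: A) = c^* *: adjmx A.
Proof. by apply/matrixP => x y; rewrite !mxE rmorphM. Qed.

Lemma adjmx1 {C : numClosedFieldType} n : adjmx (1%:M : 'M[C]_n) = 1%:M.
Proof. by apply/matrixP => x y; rewrite !mxE eq_sym rmorph_nat. Qed.

Lemma psd_tr {C : numClosedFieldType} n k (rho : 'M[C]_n) (Z : 'M[C]_(k, n)) :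
  psd rho -> 0 <= \tr (rho *m (adjmx Z *m Z)).
Proof.
move=> Hp; rewrite mulmxA mxtrace_mulC /mxtrace; apply: sumr_ge0 => i _.
have := Hp (adjmx (row i Z)); rewrite adjmxK.
suff -> : (row i Z *m rho *m adjmx (row i Z)) 0 0 = (Z *m (rho *m adjmx Z)) i i by [].
rewrite mulmxA -row_mul !mxE; apply: eq_bigr => j _; rewrite !mxE.
done.
Qed.

Lemma adj_t {C : numClosedFieldType} m n (A : 'M[C]_(m, n)) : adjmx A = map_mx Num.conj (A^T).
Proof. by rewrite /adjmx map_trmx. Qed.

Lemma obs_sq {C : numClosedFieldType} n (A : 'M[C]_n) :
  observable A -> exists W : 'M[C]_n, 1%:M - A *m A = adjmx W *m W.
Proof.
case=> hA hE.
have Aadj : map_mx Num.conj (A^T) = A by rewrite -adj_t.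
have nA : A \is normalmx by rewrite qualifE /= Aadj.
have AE := orthomx_spectralP nA.
set P := spectralmx A in AE *; set sp := spectral_diag A in AE *.
have Pu : P \is unitarymx := spectral_unitarymx A.
have Pi : P \in unitmx := spectral_unit A.
have iP : invmx P = map_mx Num.conj (P^T) by rewrite invmx_unitary.
have ev i : -1 <= sp 0 i <= 1.
  apply: hE; apply/eigenvalueP; exists (row i P).
    rewrite {1}AE !mulmxA -row_mul mulmxV // row1 -rowE row_diag_mx.
    by rewrite -scalemxAl -rowE.
  apply/eqP => h; have := row1 C i; rewrite -(mulmxV Pi) row_mul h mul0mx.
  move/matrixP/(_ 0 i); rewrite !mxE !eqxx /= => /eqP; by rewrite eq_sym oner_eq0.
set s := \row_i sqrtC (1 - sp 0 i ^+ 2).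
have s0 i : 0 <= 1 - sp 0 i ^+ 2.
  have /andP[h1 h2] := ev i.
  have : 0 <= (1 - sp 0 i) * (sp 0 i - -1) by apply: mulr_ge0; rewrite subr_ge0.
  by rewrite (_ : (1 - sp 0 i) * (sp 0 i - -1) = 1 - sp 0 i ^+ 2) //; ring.
exists (diag_mx s *m P).
have ds : adjmx (diag_mx s) = diag_mx s.
  apply/matrixP => i j; rewrite !mxE.
  case: (eqVneq i j) => [->|nij]; last by rewrite !mulr0n rmorph0.
  by rewrite !mulr1n geC0_conj // sqrtC_ge0.
rewrite adjmx_mul ds adj_t -iP.
rewrite {1 2}AE !mulmxA -[invmx P *m diag_mx sp *m P *m invmx P]mulmxA mulmxV // mulmx1.
rewrite -{1}(mulVmx Pi) -[invmx P *m diag_mx s *m diag_mx s]mulmxA -(mulmxA (invmx P)).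
rewrite -{1}(mulmx1 (invmx P)) -mulmxBl -mulmxBr.
congr (_ *m _ *m _); rewrite !mulmx_diag; apply/matrixP => i j; rewrite !mxE.
case: (eqVneq i j) => [->|nij]; last by rewrite !mulr0n subr0.
by rewrite !mulr1n -!expr2 sqrtCK.
Qed.

Lemma trD {C : numClosedFieldType} n (rho A B : 'M[C]_n) : \tr (rho *m (A + B)) = \tr (rho *m A) + \tr (rho *m B).
Proof. by rewrite mulmxDr mxtraceD. Qed.
Lemma trN {C : numClosedFieldType} n (rho A : 'M[C]_n) : \tr (rho *m (- A)) = - \tr (rho *m A).
Proof. by rewrite mulmxN -scaleN1r mxtraceZ mulN1r. Qed.
Lemma trB {C : numClosedFieldType} n (rho A B : 'M[C]_n) : \tr (rho *m (A - B)) = \tr (rho *m A) - \tr (rho *m B).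
Proof. by rewrite trD trN. Qed.
Lemma trZ {C : numClosedFieldType} n c (rho A : 'M[C]_n) : \tr (rho *m (c *: A)) = c * \tr (rho *m A).
Proof. by rewrite -scalemxAr mxtraceZ. Qed.
Lemma tr_sum {C : numClosedFieldType} n (I : finType) (rho : 'M[C]_n) (A : I -> 'M[C]_n) :
  \tr (rho *m \sum_i A i) = \sum_i \tr (rho *m A i).
Proof.
rewrite mulmx_sumr; elim/big_rec2: _ => [|i y1 y2 _ <-]; first by rewrite /mxtrace big1 // => i _; rewrite mxE.
by rewrite mxtraceD.
Qed.

Lemma qA_le {C : numClosedFieldType} d1 d2 (rho : 'M[C]_(d1 * d2)) (A : 'M[C]_d1) :
  density rho -> observable A -> \tr (rho *m kronmx (A *m A) 1%:M) <= 1.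
Proof.
move=> [hp ht] /obs_sq [W hW].
have -> : A *m A = 1%:M - adjmx W *m W by rewrite -hW opprB addrC subrK.
rewrite kronDl kronNl trB kron1 mulmx1 ht.
have -> : kronmx (adjmx W *m W) (1%:M : 'M_d2) = adjmx (kronmx W 1%:M) *m kronmx W 1%:M.
  by rewrite kron_adj adjmx1 kron_mul mulmx1.
by rewrite lerBlDr lerDl psd_tr.
Qed.

Lemma qB_le {C : numClosedFieldType} d1 d2 (rho : 'M[C]_(d1 * d2)) (A : 'M[C]_d2) :
  density rho -> observable A -> \tr (rho *m kronmx 1%:M (A *m A)) <= 1.
Proof.
move=> [hp ht] /obs_sq [W hW].
have -> : A *m A = 1%:M - adjmx W *m W by rewrite -hW opprB addrC subrK.
rewrite kronDr (_ : kronmx 1%:M (- (adjmx W *m W)) = - kronmx 1%:M (adjmx W *m W)); last first.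
  by apply/matrixP => x y; rewrite !mxE mulrN.
rewrite trB kron1 mulmx1 ht.
have -> : kronmx (1%:M : 'M_d1) (adjmx W *m W) = adjmx (kronmx 1%:M W) *m kronmx 1%:M W.
  by rewrite kron_adj adjmx1 kron_mul mulmx1.
by rewrite lerBlDr lerDl psd_tr.
Qed.

Lemma amgm {C : numClosedFieldType} d1 d2 (rho : 'M[C]_(d1 * d2)) (A : 'M[C]_d1) (N : 'M[C]_d2) t :
  psd rho -> adjmx A = A -> adjmx N = N -> 0 <= t ->
  2 * t * \tr (rho *m kronmx A N) <=
  t ^+ 2 * \tr (rho *m kronmx (A *m A) 1%:M) + \tr (rho *m kronmx 1%:M (N *m N)).
Proof.
move=> hp hA hN ht.
have := @psd_tr C _ _ rho (t *: kronmx A 1%:M - kronmx 1%:M N) hp.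
rewrite adjmxD adjmxN adjmxZ !kron_adj hA hN adjmx1 geC0_conj //.
rewrite mulmxBl !mulmxBr -!scalemxAl -!scalemxAr !kron_mul !mul1mx !mulmx1 scalerA.
rewrite !adjmx1 !mul1mx !raddfB /= !mxtraceZ.
rewrite -subr_ge0; congr (0 <= _); rewrite expr2; ring.
Qed.

Lemma adjmx_sum {C : numClosedFieldType} m n (I : finType) (F : I -> 'M[C]_(m, n)) :
  adjmx (\sum_i F i) = \sum_i adjmx (F i).
Proof.
apply/matrixP => x y; rewrite !mxE !summxE rmorph_sum; apply: eq_bigr => i _; by rewrite !mxE.
Qed.

Lemma sum_delta {C : numClosedFieldType} n (M2 : nat) (y : 'I_M2) c (F : 'I_M2 -> 'M[C]_n) :
  \sum_z (((y == z)%:R * c) *: F z) = c *: F y.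
Proof.
rewrite (bigD1 y) //= eqxx mul1r big1 ?addr0 // => z /negbTE; rewrite eq_sym => ->.
by rewrite mul0r scale0r.
Qed.

Lemma upper {C : numClosedFieldType} M1 M2 (g : 'M[C]_(M1, M2)) d1 d2 (rho : 'M[C]_(d1 * d2)) A1 A2 :
  (0 < M2)%N -> (forall x y, (g x y)^* = g x y) ->
  (forall y z, \sum_x g x y * g x z = (y == z)%:R * M1%:R) ->
  is_quantum_strategy rho A1 A2 -> strategy_value g rho A1 A2 <= M1%:R * sqrtC M2%:R.
Proof.
move=> M2p greal gorth [hrho [hA1 hA2]].
set t := sqrtC M2%:R.
have t0 : 0 < t by rewrite sqrtC_gt0 ltr0n.
have tt : t ^+ 2 = M2%:R by rewrite sqrtCK.
pose N x := \sum_y g x y *: A2 y.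
have hN x : adjmx (N x) = N x.
  rewrite adjmx_sum; apply: eq_bigr => y _; rewrite adjmxZ greal.
  by have [-> _] := hA2 y.
have VE : strategy_value g rho A1 A2 = \sum_x \tr (rho *m kronmx (A1 x) (N x)).
  apply: eq_bigr => x _; rewrite kron_sumr tr_sum; apply: eq_bigr => y _.
  by rewrite kronZr trZ.
have NN : \sum_x N x *m N x = M1%:R *: \sum_y A2 y *m A2 y.
  have E x : N x *m N x = \sum_y \sum_z (g x y * g x z) *: (A2 y *m A2 z).
    rewrite mulmx_suml; apply: eq_bigr => y _; rewrite mulmx_sumr; apply: eq_bigr => z _.
    by rewrite -scalemxAl -scalemxAr scalerA.
  under eq_bigr do rewrite E.
  rewrite exchange_big /=; rewrite scaler_sumr; apply: eq_bigr => y _.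
  rewrite exchange_big /=.
  under eq_bigr do rewrite -scaler_suml gorth.
  by rewrite sum_delta.
have Sb : \sum_x \tr (rho *m kronmx 1%:M (N x *m N x)) <= M1%:R * M2%:R.
  rewrite -tr_sum -kron_sumr NN kronZr trZ kron_sumr tr_sum; apply: ler_wpM2l; first exact: ler0n.
  apply: le_trans (_ : \sum_(y < M2) (1 : C) <= _); last by rewrite sumr_const card_ord.
  apply: ler_sum => y _.
  by apply: qB_le.
have Sa : \sum_x \tr (rho *m kronmx (A1 x *m A1 x) 1%:M) <= M1%:R.
  apply: le_trans (_ : \sum_(x < M1) (1 : C) <= _); last by rewrite sumr_const card_ord.
  apply: ler_sum => x _.
  by apply: qA_le.
have key : 2 * t * strategy_value g rho A1 A2 <= 2 * t * (M1%:R * t).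
  rewrite VE mulr_sumr.
  apply: le_trans (_ : \sum_x (t ^+ 2 * \tr (rho *m kronmx (A1 x *m A1 x) 1%:M)
        + \tr (rho *m kronmx 1%:M (N x *m N x))) <= _).
    apply: ler_sum => x _; apply: amgm => //; first by case: hrho.
      by have [-> _] := hA1 x.
    exact: ltW.
  rewrite big_split /= -mulr_sumr.
  apply: le_trans (_ : t ^+ 2 * M1%:R + M1%:R * M2%:R <= _).
    apply: lerD => //; apply: ler_wpM2l => //; exact: exprn_ge0 (ltW t0).
  rewrite (_ : 2 * t * (M1%:R * t) = t ^+ 2 * M1%:R + M1%:R * M2%:R) //; rewrite -tt; ring.
by rewrite ler_pM2l ?mulr_gt0 ?ltr0n in key.
Qed.

Definition sb {C : numClosedFieldType} (i j : nat) : C := 1 - 2 * ((i %/ 2 ^ j) %% 2)%N%:R.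

Lemma sb_sq {C : numClosedFieldType} i j : sb i j * sb i j = 1 :> C.
Proof. by rewrite /sb modn2; case: odd => /=; ring. Qed.

Lemma sb_conj {C : numClosedFieldType} i j : (sb i j)^* = sb i j :> C.
Proof. by rewrite /sb rmorphB rmorphM !rmorph_nat rmorph1. Qed.

Lemma sb00 {C : numClosedFieldType} j : sb 0 j = 1 :> C.
Proof. by rewrite /sb div0n mod0n mulr0 subr0. Qed.

Lemma sbE0 {C : numClosedFieldType} a : sb (2 * a) 0 = 1 :> C.
Proof. by rewrite /sb expn0 divn1 (_ : (2 * a) %% 2 = 0)%N ?mulr0 ?subr0 //; lia. Qed.

Lemma sbE1 {C : numClosedFieldType} a : sb (2 * a + 1) 0 = -1 :> C.
Proof. rewrite /sb expn0 divn1 (_ : (2 * a + 1) %% 2 = 1)%N; [ring | lia]. Qed.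

Lemma sbS0 {C : numClosedFieldType} a j : sb (2 * a) j.+1 = sb a j :> C.
Proof. by rewrite /sb expnS divnMA (_ : (2 * a) %/ 2 = a)%N //; lia. Qed.

Lemma sbS1 {C : numClosedFieldType} a j : sb (2 * a + 1) j.+1 = sb a j :> C.
Proof. by rewrite /sb expnS divnMA (_ : (2 * a + 1) %/ 2 = a)%N //; lia. Qed.

Lemma sum_split {C : numClosedFieldType} m (F : nat -> C) :
  \sum_(0 <= i < 2 * m) F i = \sum_(0 <= i < m) (F (2 * i)%N + F (2 * i + 1)%N).
Proof.
elim: m => [|m IH]; first by rewrite muln0 !big_geq.
rewrite (_ : 2 * m.+1 = (2 * m).+2)%N; last by lia.
rewrite !big_nat_recr //= IH addrA; congr (_ + _ + _); congr F; lia.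
Qed.

Lemma sb_orth {C : numClosedFieldType} n y z : y != z ->
  \sum_(0 <= i < 2 ^ n) (sb i y * sb i z : C) = if (n <= y)%N && (n <= z)%N then (2 ^ n)%:R else 0.
Proof.
elim: n y z => [|n IH] y z yz.
  by rewrite expn0 big_nat1 !sb00 mulr1.
rewrite expnS sum_split.
case: y yz => [|y]; case: z => [|z] //= yz.
- rewrite ?ltn0 ?andbF big1 // => i _; rewrite !sbE0 sbE1 !sbS0 sbS1; ring.
- rewrite ?ltn0 ?andbF big1 // => i _; rewrite !sbE0 sbE1 !sbS0 sbS1; ring.
rewrite ltnS ltnS.
under eq_bigr do rewrite !sbS0 !sbS1 -mulr2n.
rewrite sumrMnl IH //; case: ifP => _; last by rewrite mul0rn.
by rewrite natrM mulr_natl.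
Qed.

Lemma gmatE {C : numClosedFieldType} M1 M2 x y : gmat C M1 M2 x y = sb x y.
Proof. by rewrite mxE. Qed.

Lemma g_orth {C : numClosedFieldType} M2 : (1 <= M2)%N ->
  forall y z : 'I_M2, \sum_(x < 2 ^ (M2 - 1)) gmat C (2 ^ (M2 - 1)) M2 x y * gmat C _ M2 x z
     = (y == z)%:R * (2 ^ (M2 - 1))%N%:R.
Proof.
move=> hM y z; under eq_bigr do rewrite !gmatE.
case: (eqVneq y z) => [->|yz].
  under eq_bigr do rewrite sb_sq.
  by rewrite sumr_const card_ord mul1r.
rewrite mul0r -(big_mkord xpredT (fun i => sb i y * sb i z)) sb_orth; last by [].
case: ifP => // /andP[h1 h2]; exfalso; move: yz; rewrite -val_eqE /=.
have := ltn_ord y; have := ltn_ord z. move: h1 h2. lia.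
Qed.

Lemma g_gram {C : numClosedFieldType} M2 : (1 <= M2)%N ->
  adjmx (gmat C (2 ^ (M2 - 1)) M2) *m gmat C _ M2 = ((2 ^ (M2 - 1))%N%:R)%:M.
Proof.
move=> hM; apply/matrixP => y z; rewrite !mxE.
under eq_bigr do rewrite mxE mxE gmatE sb_conj -gmatE.
rewrite g_orth //; case: (y == z); by rewrite ?mul1r ?mul0r ?mulr1n ?mulr0n.
Qed.

Lemma sing_val {C : numClosedFieldType} M2 (s : C) : (1 <= M2)%N ->
  singular_value (gmat C (2 ^ (M2 - 1)) M2) s -> s = sqrtC (2 ^ (M2 - 1))%N%:R.
Proof.
move=> hM [s0]; rewrite g_gram // => /eigenvalueP [v].
rewrite mul_mx_scalar => /eqP; rewrite -subr_eq0 -scalerBl scaler_eq0 => /orP[|/eqP->]; last by rewrite eqxx.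
by rewrite subr_eq0 => /eqP ->; rewrite sqrCK.
Qed.

Fixpoint cdim (n : nat) : nat := match n with 0 => 1%N | k.+1 => (cdim k + cdim k)%N end.

Fixpoint cliff (C : numClosedFieldType) (n : nat) : nat -> 'M[C]_(cdim n) :=
  match n as n0 return nat -> 'M[C]_(cdim n0) with
  | 0 => fun _ => 1%:M
  | k.+1 => fun j => if (j < k)%N then block_mx (cliff C k j) 0 0 (- cliff C k j)
                     else block_mx 0 1%:M 1%:M 0
  end.

Lemma cdim_gt0 n : (0 < cdim n)%N.
Proof. by elim: n => //= n IH; rewrite addn_gt0 IH. Qed.

Lemma cl_tr (C : numClosedFieldType) n j : (cliff C n j)^T = cliff C n j.
Proof.
elim: n j => [|n IH] j /=; first by rewrite trmx1.
case: ifP => _; rewrite tr_block_mx ?IH ?trmx0 ?trmx1 //.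
by rewrite linearN /= IH.
Qed.

Lemma cl_conj (C : numClosedFieldType) n j : map_mx Num.conj (cliff C n j) = cliff C n j.
Proof.
elim: n j => [|n IH] j /=; first by rewrite map_mx1.
case: ifP => _; rewrite map_block_mx ?IH ?map_mx0 ?map_mx1 //.
by rewrite map_mxN IH.
Qed.

Lemma cl_adj (C : numClosedFieldType) n j : adjmx (cliff C n j) = cliff C n j.
Proof. by rewrite /adjmx cl_conj cl_tr. Qed.

Lemma cl_sq (C : numClosedFieldType) n j : cliff C n j *m cliff C n j = 1%:M.
Proof.
elim: n j => [|n IH] j /=; first by rewrite mulmx1.
rewrite [RHS]scalar_mx_block.
case: ifP => _; rewrite mulmx_block !mul0mx !mulmx0 ?addr0 ?add0r ?mulmx1 ?mul1mx //.
by rewrite mulNmx mulmxN opprK IH.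
Qed.

Lemma cl_anti (C : numClosedFieldType) n j l : (j < n)%N -> (l < n)%N -> j != l ->
  cliff C n j *m cliff C n l = - (cliff C n l *m cliff C n j).
Proof.
elim: n j l => [|n IH] j l //= hj hl jl.
case: (ltnP j n) => hjn; case: (ltnP l n) => hln.
- rewrite !mulmx_block !mul0mx !mulmx0 !addr0 !add0r !mulNmx !mulmxN !opprK IH //.
  by rewrite opp_block_mx oppr0.
- rewrite !mulmx_block !mul0mx !mulmx0 !addr0 !add0r !mulNmx !mulmxN !mulmx1 !mul1mx.
  by rewrite opp_block_mx !oppr0 opprK.
- rewrite !mulmx_block !mul0mx !mulmx0 !addr0 !add0r !mulNmx !mulmxN !mulmx1 !mul1mx.
  by rewrite opp_block_mx !oppr0 opprK.
- have ejl : j = l by lia.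
  by rewrite ejl eqxx in jl.
Qed.

Lemma cl_trace (C : numClosedFieldType) n j l : (j < n)%N -> (l < n)%N ->
  \tr (cliff C n j *m cliff C n l) = (j == l)%:R * (cdim n)%:R.
Proof.
move=> hj hl; case: (eqVneq j l) => [->|jl]; first by rewrite cl_sq mxtrace1 mul1r.
rewrite mul0r; apply/eqP.
have : \tr (cliff C n j *m cliff C n l) *+ 2 = 0.
  rewrite mulr2n {2}cl_anti // -scaleN1r mxtraceZ mulN1r mxtrace_mulC.
  by rewrite subrr.
by move/eqP; rewrite mulrn_eq0.
Qed.

Lemma eig_inv {C : numClosedFieldType} n (A : 'M[C]_n) a :
  A *m A = 1%:M -> eigenvalue A a -> -1 <= a <= 1.
Proof.
move=> hA /eigenvalueP [v hv v0].
have : v = (a ^+ 2) *: v by rewrite -{1}(mulmx1 v) -hA mulmxA hv -scalemxAl hv scalerA expr2.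
move/eqP; rewrite -subr_eq0 -{1}(scale1r v) -scalerBl scaler_eq0 (negbTE v0) orbF.
rewrite (_ : 1 - a ^+ 2 = (1 - a) * (1 + a)); last by ring.
rewrite mulf_eq0 => /orP[h|h].
  by rewrite subr_eq0 in h; rewrite -(eqP h) lexx andbT (le_trans (lerN10 _) ler01).
by rewrite addrC addr_eq0 in h; rewrite (eqP h) lexx (le_trans (lerN10 _) ler01).
Qed.

Definition phiv (C : numClosedFieldType) d : 'cV[C]_(d * d) :=
  \col_p (if (kron_idx p).1 == (kron_idx p).2 then (sqrtC d%:R)^-1 else 0).
Definition rhom (C : numClosedFieldType) d : 'M[C]_(d * d) := phiv C d *m adjmx (phiv C d).

Lemma collapse {C : numClosedFieldType} d (i : 'I_d) a (F : 'I_d -> C) :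
  \sum_j (if i == j then a else 0) * F j = a * F i.
Proof.
rewrite (bigD1 i) //= eqxx big1 ?addr0 // => j /negbTE; rewrite eq_sym => ->.
by rewrite mul0r.
Qed.

Lemma rho_tr {C : numClosedFieldType} d (A B : 'M[C]_d) : (0 < d)%N ->
  \tr (rhom C d *m kronmx A B) = (d%:R)^-1 * \sum_i \sum_j A i j * B i j.
Proof.
move=> d0.
set c := (sqrtC (d%:R : C))^-1.
have cc : c^* = c by rewrite geC0_conj // invr_ge0 sqrtC_ge0 ler0n.
have c2 : c * c = (d%:R)^-1 by rewrite -expr2 exprVn sqrtCK.
rewrite /rhom -mulmxA mxtrace_mulC trace_mx11 !mxE.
under eq_bigr do rewrite !mxE mulr_suml.
rewrite sum_kron.
under eq_bigr => q1 _ do under eq_bigr => q2 _ do rewrite kinvK /= -mulr_suml mulrC.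
under eq_bigr => q1 _ do rewrite collapse sum_kron.
under eq_bigr => q1 _ do under eq_bigr => i _ do under eq_bigr => j _ do rewrite !mxE !kinvK /= (fun_if Num.conj) rmorph0 cc.
under eq_bigr => q1 _ do under eq_bigr => i _ do rewrite collapse.
rewrite exchange_big /= mulr_sumr -c2; apply: eq_bigr => i _.
rewrite mulr_sumr mulr_sumr; apply: eq_bigr => j _; rewrite /c; ring.
Qed.

Lemma sum_sym {C : numClosedFieldType} d (A B : 'M[C]_d) : B^T = B ->
  \sum_i \sum_j A i j * B i j = \tr (A *m B).
Proof.
move=> hB; rewrite /mxtrace; apply: eq_bigr => i _; rewrite mxE; apply: eq_bigr => j _.
by rewrite -{2}hB mxE.
Qed.

Lemma rho_density {C : numClosedFieldType} d : (0 < d)%N -> density (rhom C d).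
Proof.
move=> d0; split.
  move=> v; rewrite /rhom.
  have -> : adjmx v *m (phiv C d *m adjmx (phiv C d)) *m v =
    adjmx (adjmx (phiv C d) *m v) *m (adjmx (phiv C d) *m v) by rewrite adjmx_mul adjmxK !mulmxA.
  rewrite !mxE big_ord1 !mxE; rewrite mulrC; exact: mul_conjC_ge0.
rewrite -[rhom C d]mulmx1 -kron1 rho_tr // sum_sym ?trmx1 // mulmx1 mxtrace1.
by rewrite mulVf // pnatr_eq0 -lt0n.
Qed.

Lemma sum_if {V : zmodType} n (i : 'I_n) (X : V) :
  \sum_(j < n) (if i == j then X else 0) = X.
Proof. by rewrite (bigD1 i) //= eqxx big1 ?addr0 // => j /negbTE; rewrite eq_sym => ->. Qed.

Lemma anti_sum {C : numClosedFieldType} d n (G : 'I_n -> 'M[C]_d) (a : 'I_n -> C) :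
  (forall y, G y *m G y = 1%:M) -> (forall y z, y != z -> G y *m G z = - (G z *m G y)) ->
  (forall y, a y * a y = 1) ->
  \sum_y \sum_z (a y * a z) *: (G y *m G z) = n%:R *: 1%:M.
Proof.
move=> hsq han ha.
set S := \sum_y \sum_z (a y * a z) *: (G y *m G z).
have HS : S + S = (n%:R * 2) *: 1%:M.
  rewrite {2}/S exchange_big /= -big_split /=.
  have E i j : (a i * a j) *: (G i *m G j) + (a j * a i) *: (G j *m G i)
      = if i == j then 2 *: 1%:M else 0.
    case: (eqVneq i j) => [->|ij]; first by rewrite hsq ha -scalerDl.
    by rewrite han // mulrC scalerN addNr.
  under eq_bigr => i _ do rewrite -big_split /=.
  under eq_bigr => i _ do under eq_bigr => j _ do rewrite E.
  under eq_bigr => i _ do rewrite sum_if.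
  by rewrite sumr_const card_ord -scaler_nat scalerA.
have -> : S = (2 : C)^-1 *: (S + S).
  by rewrite -mulr2n -scaler_nat scalerA mulVf ?pnatr_eq0 // scale1r.
by rewrite HS scalerA; congr (_ *: _); rewrite mulrC -mulrA mulfV ?mulr1 // pnatr_eq0.
Qed.

Lemma lower (C : numClosedFieldType) M2 : (1 <= M2)%N ->
  exists d1 d2 (rho : 'M[C]_(d1 * d2)) (A1 : 'I_(2 ^ (M2 - 1)) -> 'M[C]_d1) (A2 : 'I_M2 -> 'M[C]_d2),
   is_quantum_strategy rho A1 A2 /\
   strategy_value (gmat C (2 ^ (M2 - 1)) M2) rho A1 A2 = (2 ^ (M2 - 1))%N%:R * sqrtC M2%:R.
Proof.
move=> hM.
set M1 := (2 ^ (M2 - 1))%N.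
set d := cdim M2.
have d0 : (0 < d)%N := cdim_gt0 M2.
set t := sqrtC (M2%:R : C).
have t0 : 0 < t by rewrite sqrtC_gt0 ltr0n.
have tt : t ^+ 2 = M2%:R by rewrite sqrtCK.
have tn0 : t != 0 by rewrite gt_eqF.
set g := gmat C M1 M2.
pose G (y : 'I_M2) := cliff C M2 y.
pose A1 x := t^-1 *: \sum_y g x y *: G y.
have gr x y : (g x y)^* = g x y by rewrite /g gmatE sb_conj.
have gsq x y : g x y * g x y = 1 by rewrite /g gmatE sb_sq.
have hGt y z : \tr (G y *m G z) = (y == z)%:R * d%:R by rewrite /G cl_trace.
have A1sq x : A1 x *m A1 x = 1%:M.
  rewrite /A1 -scalemxAl -scalemxAr scalerA mulmx_suml.
  under eq_bigr do rewrite mulmx_sumr.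
  under eq_bigr => y _ do under eq_bigr => z _ do rewrite -scalemxAl -scalemxAr scalerA.
  rewrite anti_sum //.
  - by rewrite scalerA -tt -expr2 exprVn mulVf ?scale1r // expf_neq0.
  - by move=> y; apply: cl_sq.
  - by move=> y z yz; apply: cl_anti.
have A1adj x : adjmx (A1 x) = A1 x.
  rewrite /A1 adjmxZ adjmx_sum geC0_conj ?invr_ge0 ?ltW //; congr (_ *: _).
  by apply: eq_bigr => y _; rewrite adjmxZ gr cl_adj.
exists d, d, (rhom C d), A1, G; split.
  split; first exact: rho_density.
  split => [x|y]; split.
  - exact: A1adj.
  - by move=> a; apply: eig_inv.
  - exact: cl_adj.
  - by move=> a; apply: eig_inv; apply: cl_sq.
have trA x y : \tr (A1 x *m G y) = t^-1 * g x y * d%:R.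
  rewrite /A1 -scalemxAl mxtraceZ mulmx_suml raddf_sum /= -mulrA; congr (_ * _).
  under eq_bigr do rewrite -scalemxAl mxtraceZ hGt.
  rewrite (bigD1 y) //= eqxx mul1r big1 ?addr0 // => z /negbTE ->.
  by rewrite mul0r mulr0.
rewrite /strategy_value.
under eq_bigr => x _ do under eq_bigr => y _ do rewrite rho_tr // sum_sym ?cl_tr // trA.
have E x y : g x y * ((d%:R)^-1 * (t^-1 * g x y * d%:R)) = t^-1.
  rewrite (_ : g x y * ((d%:R)^-1 * (t^-1 * g x y * d%:R)) = (g x y * g x y) * t^-1 * ((d%:R)^-1 * d%:R)); last by ring.
  by rewrite gsq mulVf ?pnatr_eq0 -?lt0n // mul1r mulr1.
under eq_bigr => x _ do under eq_bigr => y _ do rewrite E.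
rewrite !sumr_const !card_ord -[t^-1 *+ M2]mulr_natl -[_ *+ M1]mulr_natl; congr (_ * _).
by rewrite -tt expr2 -mulrA mulfV // mulr1.
Qed.

Theorem mainTheorem10 (C : numClosedFieldType) (M2 : nat) (hM2 : (1 <= M2)%N) :
  let M1 := (2 ^ (M2 - 1))%N in
  (forall s : C, singular_value (gmat C M1 M2) s -> s = sqrtC (M1%:R)) /\
  quantum_value_attained (gmat C M1 M2) (M1%:R * sqrtC (M2%:R)).
Proof.
move=> M1; split.
  by move=> s; apply: sing_val.
split.
  move=> d1 d2 rho A1 A2 hs; apply: upper => //.
    by move=> x y; rewrite gmatE sb_conj.
  exact: g_orth.
exact: lower.
Qed.
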